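(* Let $x_0 \in \mathbb R^{n_x}$ and $u_0 \in \mathbb R^{n_u} \times \{0,1\}^{m_u}$ with $(x_0,u_0) \in \mathcal D$, let $v_0 := V u_0$, let $e_0 \in \mathbb R^{n_x}$, and let $x_1 := A x_0 + B u_0 + e_0$. Let $\mathcal V_0 = [(\underline v_{t|0})_{t=0}^{T-1}, (\bar v_{t|0})_{t=0}^{T-1}]$ be an interval with $\underline v_{0|0} \le v_0 \le \bar v_{0|0}$, and let $\mathcal V_1 := [(\underline v_{1|0}, \ldots, \underline v_{T-1|0}, 0), (\bar v_{1|0}, \ldots, \bar v_{T-1|0}, 1)]$. Let $\{\lambda_{t|0}, \rho_{t|0}\}_{t=0}^{T}$, $\{\mu_{t|0}, \underline\nu_{t|0}, \bar\nu_{t|0}, \sigma_{t|0}\}_{t=0}^{T-1}$ be a certificate of infeasibility for $\mathbf P(\mathcal V_0; x_0)$, with dual objective value $\underline\theta_0(\mathcal V_0)$ (for $\mathbf D(\mathcal V_0; x_0)$). Define the shifted multipliers $(\lambda_{t|1}, \rho_{t|1}) := (\lambda_{t+1|0}, \rho_{t+1|0})$ for $t = 0,\ldots,T-1$, $(\lambda_{T|1}, \rho_{T|1}) := 0$, $(\mu_{t|1}, \underline\nu_{t|1}, \bar\nu_{t|1}, \sigma_{t|1}) := (\mu_{t+1|0}, \underline\nu_{t+1|0}, \bar\nu_{t+1|0}, \sigma_{t+1|0})$ for $t = 0,\ldots,T-2$, and $(\mu_{T-1|1}, \underline\nu_{T-1|1}, \bar\nu_{T-1|1}, \sigma_{T-1|1})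 := 0$. Let $\pi_3 := (h - F x_0 - G u_0)'\mu_{0|0} + (v_0 - \underline v_{0|0})'\underline\nu_{0|0} + (\bar v_{0|0} - v_0)'\bar\nu_{0|0}$. Then the shifted multipliers form a certificate of infeasibility for $\mathbf P(\mathcal V_1; x_1)$ whenever $\lambda_{1|0}' e_0 < \underline\theta_0(\mathcal V_0) + \pi_3$. Moreover, this inequality always holds if $e_0 = 0$.
   Context: Fix integers $n_x, n_u, m_u \ge 0$ and $T \ge 1$. Let $A \in \mathbb R^{n_x \times n_x}$, $B \in \mathbb R^{n_x \times (n_u+m_u)}$, and let $F, G, h$ define the polyhedron $\mathcal D = \{(x,u) \in \mathbb R^{n_x} \times \mathbb R^{n_u+m_u} : F x + G u \le h\}$, assumed to contain the origin. $V \in \mathbb R^{m_u \times (n_u+m_u)}$ is the selection matrix extracting the $m_u$ binary entries of an input vector. Let $Q$ (with $n_x$ columns) and $R$ (with $n_u+m_u$ columns) be weight matrices, possibly rank deficient. An interval is a set $\mathcal V = [(\underline v_t)_{t=0}^{T-1}, (\bar v_t)_{t=0}^{T-1}] \subset \mathbb R^{T m_u}$ with $\underline v_t, \bar v_t \in \{0,1\}^{m_u}$, $\underline v_t \le \bar v_t$; in $\mathcal V_1$ above the appended blocks $0,1$ are the all-zero and all-one vectors of $\mathbb R^{m_u}$. For an interval $\mathcal V$ and $\xi \in \mathbb R^{n_x}$, the QP $\mathbf P(\mathcal V; \xi)$ is: minimize $\sum_{t=0}^T |Q x_t|^2 + \sum_{t=0}^{T-1} |R u_t|^2$ over $x_0,\ldots,x_T$,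 $u_0, \ldots, u_{T-1}$ subject to $x_0 = \xi$, $x_{t+1} = A x_t + B u_t$, $(x_t, u_t) \in \mathcal D$, $\underline v_t \le V u_t \le \bar v_t$ ($t = 0, \ldots, T-1$). Its dual $\mathbf D(\mathcal V; \xi)$ is: maximize $$-\sum_{t=0}^{T} |\rho_t/2|^2 - \sum_{t=0}^{T-1}\big(|\sigma_t/2|^2 + h'\mu_t + \bar v_t'\bar\nu_t - \underline v_t'\underline\nu_t\big) - \xi'\lambda_0$$ over $\{\lambda_t, \rho_t\}_{t=0}^T$, $\{\mu_t, \underline\nu_t, \bar\nu_t, \sigma_t\}_{t=0}^{T-1}$ subject to: $Q'\rho_t + \lambda_t - A'\lambda_{t+1} + F'\mu_t = 0$ ($t=0,\ldots,T-1$); $Q'\rho_T + \lambda_T = 0$; $R'\sigma_t - B'\lambda_{t+1} + G'\mu_t + V'(\bar\nu_t - \underline\nu_t) = 0$ ($t = 0, \ldots, T-1$); $(\mu_t, \underline\nu_t, \bar\nu_t) \ge 0$. A certificate of infeasibility for $\mathbf P(\mathcal V;\xi)$ is a feasible point of $\mathbf D(\mathcal V;\xi)$ whose dual objective value is strictly positive and for which $\rho_t = 0$ and $\sigma_t = 0$ for all $t$. *)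

(* Defs.v *)
(* Vectors are column vectors 'cV[R]_n over an ordered field R;
   time-indexed families are functions nat -> 'cV_n (only indices in range matter). *)
From HB Require Import structures.
From mathcomp Require Import all_boot all_order all_algebra.
Set Implicit Arguments. Unset Strict Implicit. Unset Printing Implicit Defensive.
Import Order.TTheory GRing.Theory Num.Theory.
Local Open Scope ring_scope.

Section Defs.
Variable R : realFieldType.

Definition dotv n (u v : 'cV[R]_n) : R := \sum_i u i 0 * v i 0.
Definition sqnorm n (u : 'cV[R]_n) : R := dotv u u.
Definition vle n (u v : 'cV[R]_n) : Prop := forall i, u i 0 <= v i 0.
Definition is_binary n (u : 'cV[R]_n) : Prop := forall i, u i 0 = 0 \/ u i 0 = 1.

(* selection matrix V extracting the last m_u (binary) entries of an input in R^{n_u} x {0,1}^{m_u} *)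
Definition selV (nu mu : nat) : 'M[R]_(mu, nu + mu) := row_mx 0 1%:M.

Definition is_interval (mu T : nat) (vlo vhi : nat -> 'cV[R]_mu) : Prop :=
  forall t, (t < T)%N -> [/\ is_binary (vlo t), is_binary (vhi t) & vle (vlo t) (vhi t)].

Definition dual_obj (nx mu nc nq nr T : nat) (h : 'cV[R]_nc)
    (vlo vhi : nat -> 'cV[R]_mu) (xi : 'cV[R]_nx)
    (lam : nat -> 'cV[R]_nx) (rho : nat -> 'cV[R]_nq) (muv : nat -> 'cV[R]_nc)
    (nulo nuhi : nat -> 'cV[R]_mu) (sig : nat -> 'cV[R]_nr) : R :=
  - (\sum_(t < T.+1) sqnorm ((2^-1 : R) *: rho t))
  - (\sum_(t < T) (sqnorm ((2^-1 : R) *: sig t) + dotv h (muv t)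
                   + dotv (vhi t) (nuhi t) - dotv (vlo t) (nulo t)))
  - dotv xi (lam 0%N).

Definition dual_feasible (nx nu mu nc nq nr T : nat)
    (A : 'M[R]_nx) (B : 'M[R]_(nx, nu + mu)) (F : 'M[R]_(nc, nx))
    (G : 'M[R]_(nc, nu + mu)) (Q : 'M[R]_(nq, nx)) (Rm : 'M[R]_(nr, nu + mu))
    (lam : nat -> 'cV[R]_nx) (rho : nat -> 'cV[R]_nq) (muv : nat -> 'cV[R]_nc)
    (nulo nuhi : nat -> 'cV[R]_mu) (sig : nat -> 'cV[R]_nr) : Prop :=
  [/\ (forall t, (t < T)%N ->
         Q^T *m rho t + lam t - A^T *m lam t.+1 + F^T *m muv t = 0),
      Q^T *m rho T + lam T = 0,
      (forall t, (t < T)%N ->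
         Rm^T *m sig t - B^T *m lam t.+1 + G^T *m muv t
           + (selV nu mu)^T *m (nuhi t - nulo t) = 0)
    & (forall t, (t < T)%N ->
         [/\ vle 0 (muv t), vle 0 (nulo t) & vle 0 (nuhi t)])].

Definition infeas_cert (nx nu mu nc nq nr T : nat)
    (A : 'M[R]_nx) (B : 'M[R]_(nx, nu + mu)) (F : 'M[R]_(nc, nx))
    (G : 'M[R]_(nc, nu + mu)) (h : 'cV[R]_nc) (Q : 'M[R]_(nq, nx))
    (Rm : 'M[R]_(nr, nu + mu))
    (vlo vhi : nat -> 'cV[R]_mu) (xi : 'cV[R]_nx)
    (lam : nat -> 'cV[R]_nx) (rho : nat -> 'cV[R]_nq) (muv : nat -> 'cV[R]_nc)
    (nulo nuhi : nat -> 'cV[R]_mu) (sig : nat -> 'cV[R]_nr) : Prop :=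
  [/\ dual_feasible T A B F G Q Rm lam rho muv nulo nuhi sig,
      0 < dual_obj T h vlo vhi xi lam rho muv nulo nuhi sig,
      (forall t, (t <= T)%N -> rho t = 0)
    & (forall t, (t < T)%N -> sig t = 0)].

End Defs.

(* Main.v *)
Require Import Defs.
From HB Require Import structures.
From mathcomp Require Import all_boot all_order all_algebra.
From mathcomp Require Import lra.
Import Order.TTheory GRing.Theory Num.Theory.
Local Open Scope ring_scope.


Set Implicit Arguments. Unset Strict Implicit.

Section H.
Variable R : realFieldType.

Lemma zmod_aux (V : zmodType) (a b c : V) : - a + b + c = 0 -> a = b + c.
Proof.
move=> E; apply/eqP; rewrite -subr_eq0 -oppr_eq0 -E opprB.
by rewrite addrC addrA.
Qed.

Lemma dotvE n (u v : 'cV[R]_n) : dotv u v = (u^T *m v) 0 0.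
Proof. rewrite /dotv mxE; apply: eq_bigr => i _; by rewrite mxE. Qed.
Lemma dotvC n (u v : 'cV[R]_n) : dotv u v = dotv v u.
Proof. rewrite /dotv; apply: eq_bigr => i _; by rewrite mulrC. Qed.
Lemma dotvDl n (u w v : 'cV[R]_n) : dotv (u + w) v = dotv u v + dotv w v.
Proof. rewrite /dotv -big_split; apply: eq_bigr => i _; by rewrite mxE mulrDl. Qed.
Lemma dotvNl n (u v : 'cV[R]_n) : dotv (- u) v = - dotv u v.
Proof. rewrite /dotv -sumrN; apply: eq_bigr => i _; by rewrite mxE mulNr. Qed.
Lemma dotvBl n (u w v : 'cV[R]_n) : dotv (u - w) v = dotv u v - dotv w v.
Proof. by rewrite dotvDl dotvNl. Qed.
Lemma dotvDr n (u w v : 'cV[R]_n) : dotv v (u + w) = dotv v u + dotv v w.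
Proof. by rewrite !(dotvC v) dotvDl. Qed.
Lemma dotvBr n (u w v : 'cV[R]_n) : dotv v (u - w) = dotv v u - dotv v w.
Proof. by rewrite !(dotvC v) dotvBl. Qed.
Lemma dotv0l n (v : 'cV[R]_n) : dotv 0 v = 0.
Proof. rewrite /dotv big1 // => i _; by rewrite mxE mul0r. Qed.
Lemma dotv0r n (v : 'cV[R]_n) : dotv v 0 = 0.
Proof. by rewrite dotvC dotv0l. Qed.
Lemma dotv_mulmx m n (M : 'M[R]_(m, n)) x y : dotv (M *m x) y = dotv x (M^T *m y).
Proof. by rewrite !dotvE trmx_mul mulmxA. Qed.
Lemma dotv_mulmxT m n (M : 'M[R]_(m, n)) x y : dotv x (M^T *m y) = dotv (M *m x) y.
Proof. by rewrite dotv_mulmx. Qed.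
Lemma dotv_ge0 n (u v : 'cV[R]_n) : vle 0 u -> vle 0 v -> 0 <= dotv u v.
Proof.
move=> hu hv; apply: sumr_ge0 => i _; apply: mulr_ge0.
  by have := hu i; rewrite mxE.
by have := hv i; rewrite mxE.
Qed.

Lemma obj_simpl (nx mu nc nq nr T : nat) (h : 'cV[R]_nc)
    (vlo vhi : nat -> 'cV[R]_mu) (xi : 'cV[R]_nx)
    (lam : nat -> 'cV[R]_nx) (rho : nat -> 'cV[R]_nq) (muv : nat -> 'cV[R]_nc)
    (nulo nuhi : nat -> 'cV[R]_mu) (sig : nat -> 'cV[R]_nr) :
  (forall t, (t <= T)%N -> rho t = 0) -> (forall t, (t < T)%N -> sig t = 0) ->
  dual_obj T h vlo vhi xi lam rho muv nulo nuhi sig =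
  - (\sum_(t < T) (dotv h (muv t) + dotv (vhi t) (nuhi t) - dotv (vlo t) (nulo t)))
  - dotv xi (lam 0%N).
Proof.
move=> Hr Hs; rewrite /dual_obj big1 => [|t _]; last first.
  by rewrite Hr ?leq_ord // scaler0 /sqnorm dotv0l.
rewrite oppr0 sub0r; congr (- _ - _); apply: eq_bigr => t _.
by rewrite Hs // scaler0 /sqnorm dotv0l add0r.
Qed.
End H.
Unset Implicit Arguments.

Theorem corollary1 (R : realFieldType) (nx nu mu nc nq nr T : nat)
    (A : 'M[R]_nx) (B : 'M[R]_(nx, nu + mu)) (F : 'M[R]_(nc, nx))
    (G : 'M[R]_(nc, nu + mu)) (h : 'cV[R]_nc) (Q : 'M[R]_(nq, nx))
    (Rm : 'M[R]_(nr, nu + mu))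
    (x0 : 'cV[R]_nx) (u0 : 'cV[R]_(nu + mu)) (e0 : 'cV[R]_nx)
    (vlo vhi : nat -> 'cV[R]_mu)
    (lam : nat -> 'cV[R]_nx) (rho : nat -> 'cV[R]_nq) (muv : nat -> 'cV[R]_nc)
    (nulo nuhi : nat -> 'cV[R]_mu) (sig : nat -> 'cV[R]_nr) :
  (0 < T)%N ->
  vle 0 h ->                                   (* D contains the origin *)
  vle (F *m x0 + G *m u0) h ->                 (* (x0, u0) in D *)
  is_binary (selV R nu mu *m u0) ->              (* u0 in R^nu x {0,1}^mu *)
  is_interval T vlo vhi ->
  vle (vlo 0%N) (selV R nu mu *m u0) -> vle (selV R nu mu *m u0) (vhi 0%N) ->
  infeas_cert T A B F G h Q Rm vlo vhi x0 lam rho muv nulo nuhi sig ->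
  let v0 := selV R nu mu *m u0 in
  let x1 := A *m x0 + B *m u0 + e0 in
  let vlo1 := fun t => if (t.+1 < T)%N then vlo t.+1 else 0 in
  let vhi1 := fun t => if (t.+1 < T)%N then vhi t.+1 else const_mx 1 in
  let lam1 := fun t => if (t < T)%N then lam t.+1 else 0 in
  let rho1 := fun t => if (t < T)%N then rho t.+1 else 0 in
  let muv1 := fun t => if (t.+1 < T)%N then muv t.+1 else 0 in
  let nulo1 := fun t => if (t.+1 < T)%N then nulo t.+1 else 0 in
  let nuhi1 := fun t => if (t.+1 < T)%N then nuhi t.+1 else 0 in
  let sig1 := fun t => if (t.+1 < T)%N then sig t.+1 else 0 in
  let theta0 := dual_obj T h vlo vhi x0 lam rho muv nulo nuhi sig in
  let pi3 := dotv (h - F *m x0 - G *m u0) (muv 0%N)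
             + dotv (v0 - vlo 0%N) (nulo 0%N) + dotv (vhi 0%N - v0) (nuhi 0%N) in
  (dotv (lam 1%N) e0 < theta0 + pi3 ->
     infeas_cert T A B F G h Q Rm vlo1 vhi1 x1 lam1 rho1 muv1 nulo1 nuhi1 sig1)
  /\ (e0 = 0 -> dotv (lam 1%N) e0 < theta0 + pi3).
Proof.
move=> T0 h0 hD bin itv vl vh [[Ef ET Eb Enn] pos Hrho Hsig] v0 x1 vlo1 vhi1
  lam1 rho1 muv1 nulo1 nuhi1 sig1 theta0 pi3.
have [S eS] : exists S, T = S.+1 by exists T.-1; rewrite prednK.
subst T.
have HT : lam S.+1 = 0.
  by move: ET; rewrite Hrho // mulmx0 add0r.
have HA : A^T *m lam 1%N = lam 0%N + F^T *m muv 0%N.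
  have := Ef 0%N isT; rewrite Hrho // mulmx0 add0r => E.
  by rewrite -[A^T *m lam 1%N]add0r -E addrAC subrK.
have HB : B^T *m lam 1%N = G^T *m muv 0%N + (selV R nu mu)^T *m (nuhi 0%N - nulo 0%N).
  have := Eb 0%N isT; rewrite Hsig // mulmx0 sub0r => E.
  exact: zmod_aux E.
have pi3ge0 : 0 <= pi3.
  rewrite /pi3; apply: addr_ge0; first apply: addr_ge0.
  - apply: dotv_ge0; last by case: (Enn 0%N isT).
    move=> i; have := hD i; rewrite !mxE; lra.
  - apply: dotv_ge0; last by case: (Enn 0%N isT).
    move=> i; have := vl i; rewrite !mxE; lra.
  - apply: dotv_ge0; last by case: (Enn 0%N isT).
    move=> i; have := vh i; rewrite !mxE; lra.
split; last first.
  by move=> ->; rewrite dotv0r; rewrite /theta0; lra.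
move=> Hlt.
have H1r : forall t, (t <= S.+1)%N -> rho1 t = 0.
  move=> t tT; rewrite /rho1; case: ifP => // tlt; exact: Hrho.
have H1s : forall t, (t < S.+1)%N -> sig1 t = 0.
  move=> t tT; rewrite /sig1; case: ifP => // tlt; exact: Hsig.
split; [ | | exact: H1r | exact: H1s].
- split.
  + move=> t tT.
    rewrite H1r; last exact: ltnW.
    rewrite mulmx0 add0r /lam1 /muv1 tT.
    case: ifP => h1.
      have := Ef _ h1. rewrite Hrho; last by []. rewrite mulmx0 add0r.
      exact.
    have eT : t.+1 = S.+1 by apply/eqP; rewrite eqn_leq tT leqNgt h1.
    rewrite eT HT !mulmx0 subr0 addr0; reflexivity.
  + rewrite /rho1 /lam1 ltnn !mulmx0 addr0; reflexivity.
  + move=> t tT.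
    rewrite H1s; last exact: tT.
    rewrite mulmx0 sub0r /lam1 /muv1 /nuhi1 /nulo1.
    case: ifP => h1.
      have := Eb _ h1. rewrite Hsig; last by []. rewrite mulmx0 sub0r.
      exact.
    have eT : t.+1 = S.+1 by apply/eqP; rewrite eqn_leq tT leqNgt h1.
    rewrite ?mulmx0 ?oppr0 ?add0r ?oppr0 ?mulmx0 ?add0r; reflexivity.
  + move=> t tT; rewrite /muv1 /nulo1 /nuhi1; case: ifP => h1; first exact: Enn.
    by split => i; rewrite lexx.
- rewrite obj_simpl; [ | exact: H1r | exact: H1s].
  have -> : \sum_(t < S.+1) (dotv h (muv1 t) + dotv (vhi1 t) (nuhi1 t) - dotv (vlo1 t) (nulo1 t))
     = \sum_(i < S) (dotv h (muv i.+1) + dotv (vhi i.+1) (nuhi i.+1) - dotv (vlo i.+1) (nulo i.+1)).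
    rewrite big_ord_recr /=.
    rewrite [X in _ + X](_ : _ = 0) ?addr0.
      by apply: eq_bigr => i _; rewrite /muv1 /vhi1 /nuhi1 /vlo1 /nulo1 /= ltnS ltn_ord.
    by rewrite /muv1 /vhi1 /nuhi1 /vlo1 /nulo1 ltnn !dotv0r addr0 subr0.
  move: Hlt; rewrite /theta0 obj_simpl; [ | exact: Hrho | exact: Hsig].
  rewrite big_ord_recl /=.
  have -> : \sum_(i < S) (dotv h (muv (lift ord0 i)) + dotv (vhi (lift ord0 i)) (nuhi (lift ord0 i)) - dotv (vlo (lift ord0 i)) (nulo (lift ord0 i)))
     = \sum_(i < S) (dotv h (muv i.+1) + dotv (vhi i.+1) (nuhi i.+1) - dotv (vlo i.+1) (nulo i.+1)).
    by apply: eq_bigr => i _; rewrite lift0.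
  have Hl0 : lam1 0%N = lam 1%N by [].
  rewrite Hl0.
  have Hx1 : dotv x1 (lam 1%N) = dotv x0 (lam 0%N) + dotv (F *m x0) (muv 0%N)
     + dotv (G *m u0) (muv 0%N) + dotv v0 (nuhi 0%N) - dotv v0 (nulo 0%N) + dotv e0 (lam 1%N).
    rewrite /x1 !dotvDl !dotv_mulmx HA HB !dotvDr !dotv_mulmxT dotvBr /v0; lra.
  have Hpi : pi3 = dotv h (muv 0%N) - dotv (F *m x0) (muv 0%N) - dotv (G *m u0) (muv 0%N)
     + dotv v0 (nulo 0%N) - dotv (vlo 0%N) (nulo 0%N) + dotv (vhi 0%N) (nuhi 0%N) - dotv v0 (nuhi 0%N).
    rewrite /pi3 !dotvBl; lra.
  rewrite Hpi Hx1 (dotvC (lam 1%N)); lra.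
Qed.
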